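(* Let $f,g\in\mathrm{PF}$, and assume $f$ is mean Lipschitz smooth with mean Lipschitz constant $L^\mu_f$. Then the convolution $(f*g)(t)=\frac1{2\pi}\int_0^{2\pi}f(t-\tau)g(\tau)\,\mathrm d\tau$ is Lipschitz continuous with Lipschitz constant at most $L^\mu_f$.
   Context: $\mathrm{PF}$ denotes the set of functions $f:\mathbb R\to\mathbb C$ that are $2\pi$-periodic, satisfy $\int_0^{2\pi}f(t)\,\mathrm dt=0$, and $\sup_t|f(t)|\le1$. A $2\pi$-periodic function $f$ is mean Lipschitz smooth with mean Lipschitz constant $L^\mu_f$ if for all $\delta\in(0,\pi]$, $$\frac1{2\pi}\int_0^{2\pi}\sup_{r\in[-\delta,\delta]}|f(t+r)-f(t)|\,\mathrm dt\le L^\mu_f\,\delta.$$ Here a function $u$ is Lipschitz continuous with constant $L$ if $\sup_{r\in[-\delta,\delta]}|u(t+r)-u(t)|\le L\delta$ for all $t\in\mathbb R$, $\delta>0$. *)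

(* Defs.v *)
From mathcomp Require Import all_boot all_order all_algebra.
From mathcomp Require Import all_classical all_reals all_analysis.
From mathcomp Require Export complex.
Import Order.TTheory GRing.Theory Num.Theory.

Set Implicit Arguments.
Unset Strict Implicit.
Unset Printing Implicit Defensive.

Local Open Scope classical_set_scope.
Local Open Scope ring_scope.

Section Defs.
Variable R : realType.

Definition cmod (z : R[i]) : R := Normc.normc z.

Definition cintegral (D : set R) (h : R -> R[i]) : R[i] :=
  Complex (Rintegral lebesgue_measure D (fun x => complex.Re (h x)))
          (Rintegral lebesgue_measure D (fun x => complex.Im (h x))).

Definition periodic2pi (f : R -> R[i]) : Prop :=
  forall t : R, f (t + 2 * pi) = f t.

Definition in_PF (f : R -> R[i]) : Prop :=
  [/\ periodic2pi f,
      measurable_fun setT (fun x => complex.Re (f x)),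
      measurable_fun setT (fun x => complex.Im (f x)),
      cintegral `[0, 2 * pi] f = 0
    & forall t : R, cmod (f t) <= 1].

Definition mean_lipschitz_smooth (f : R -> R[i]) (L : R) : Prop :=
  forall d : R, 0 < d <= pi ->
    (((2 * pi)^-1)%:E *
      \int[lebesgue_measure]_(t in `[0%R, (2 * pi)%R])
         ereal_sup [set (cmod (f (t + r) - f t))%:E | r in `[(- d)%R, d]]
     <= (L * d)%:E)%E.

Definition lipschitz_cont (u : R -> R[i]) (L : R) : Prop :=
  forall t d : R, 0 < d ->
    (ereal_sup [set (cmod (u (t + r) - u t))%:E | r in `[(- d)%R, d]]
     <= (L * d)%:E)%E.

Definition convolution (f g : R -> R[i]) (t : R) : R[i] :=
  ((2 * pi)^-1)%:C%C * cintegral `[0, 2 * pi] (fun tau => f (t - tau) * g tau).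

End Defs.

(* Main.v *)
From HB Require Import structures.
Require Import Defs.
From mathcomp Require Import all_boot all_order all_algebra.
From mathcomp Require Import all_classical all_reals all_analysis.
From mathcomp Require Import complex.
From mathcomp Require Import lra ring.
From mathcomp Require Import topology normedtype sequences measure lebesgue_measure measurable_realfun lebesgue_integral ftc.
Import numFieldTopology.Exports numFieldNormedType.Exports.
Import Order.TTheory GRing.Theory Num.Theory.
Local Open Scope classical_set_scope.
Local Open Scope ring_scope.

Section Helpers.
Import Order.TTheory GRing.Theory Num.Theory.
Local Open Scope classical_set_scope.
Local Open Scope ring_scope.
Context {R : realType}.
Local Notation mu := (@lebesgue_measure R).

Import HBNNSimple.
Section GL.
Local Open Scope ereal_scope.

Lemma ge0_le_integral1 d (T : measurableType d) (mu0 : {measure set T -> \bar R})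
  (D : set T) (mD : measurable D) (f1 f2 : T -> \bar R) :
  (forall x, D x -> (0 <= f1 x)%E) -> measurable_fun D f1 ->
  (forall x, D x -> (f1 x <= f2 x)%E) ->
  (\int[mu0]_(x in D) f1 x <= \int[mu0]_(x in D) f2 x)%E.
Proof.
move=> f10 mf1 f12; rewrite !(integral_mkcond D).
set h1 := f1 \_ D; set h2 := f2 \_ D.
have h10 x : (0 <= h1 x)%E by apply: erestrict_ge0.
have h20 x : (0 <= h2 x)%E.
  by apply: erestrict_ge0 => // t /[dup] Dt /f12; apply: le_trans; exact: f10.
have mh1 : measurable_fun setT h1 by exact/(measurable_restrictT _ _).1.
have h12 x : (h1 x <= h2 x)%E by apply: lee_restrict.
pose g1 := nnsfun_approx measurableT mh1.
rewrite (@nd_ge0_integral_lim _ _ _ _ _ g1)//; last 2 first.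
  by move=> x m n mn; exact/lefP/nd_nnsfun_approx.
  by move=> x; exact: cvg_nnsfun_approx.
apply: lime_le.
  by apply: is_cvg_sintegral => // t m n mn; exact/lefP/nd_nnsfun_approx.
near=> n; rewrite ge0_integralTE//; apply: ereal_sup_ubound => /=.
exists (g1 n) => // t; rewrite (le_trans _ (h12 _))//.
have := leey (h1 t); rewrite le_eqVlt => /predU1P[->|ftoo].
  by rewrite leey.
have h1tfin : h1 t \is a fin_num.
  by rewrite fin_numE gt_eqF/= ?lt_eqF// (lt_le_trans _ (h10 t)).
have /= := @cvg_nnsfun_approx _ _ _ _ measurableT _ mh1 (fun x _ => h10 x) t Logic.I.
rewrite -(fineK h1tfin) => /fine_cvgP[_ u_h1].
rewrite /= lee_fin.
rewrite -(cvg_lim _ u_h1) //.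
apply: (nondecreasing_cvgn_le (u_ := fine \o (EFin \o (fun x0 : nat => g1 x0 t)))).
  move=> // a b ab /=. have := (nd_nnsfun_approx measurableT mh1 ab). move/lefP. by move=> /(_ t).
by apply/cvg_ex; eexists; exact: u_h1.
Unshelve. all: by end_near. Qed.
End GL.

End Helpers.

Definition rflc (R : realType) (c : R) (x : measurableTypeR R) : measurableTypeR R := c - x.
Definition shfc (R : realType) (c : R) (x : measurableTypeR R) : measurableTypeR R := x + c.

Arguments rflc {R}. Arguments shfc {R}.
Lemma measurable_rflc (R : realType) (c : R) : measurable_fun setT (rflc c).
Proof. by apply: measurable_funB => //; exact: measurable_cst. Qed.
Lemma measurable_shfc (R : realType) (c : R) : measurable_fun setT (shfc c).
Proof. by apply: measurable_funD => //; exact: measurable_cst. Qed.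

HB.instance Definition _ (R : realType) (c : R) :=
  isMeasurableFun.Build _ _ _ _ (rflc c) (@measurable_rflc R c).
HB.instance Definition _ (R : realType) (c : R) :=
  isMeasurableFun.Build _ _ _ _ (shfc c) (@measurable_shfc R c).

Section S.
Context {R : realType}.
Local Notation mu := (@lebesgue_measure R).
Lemma push_refl (c : R) (A : set R) : measurable A ->
  pushforward mu (rflc c) A = mu A.
Proof.
move=> mA; apply/esym/lebesgue_measure_unique => //= _ [[a b]] _ <-.
rewrite /pushforward /=.
have -> : rflc c @^-1` `]a, b]%classic = `[c - b, c - a[%classic.
  apply/seteqP; split => x /=; rewrite /rflc !in_itv /= => /andP[h1 h2];
    apply/andP; split; lra.
rewrite !lebesgue_measure_itv /= !lte_fin.
have -> : (c - b < c - a) = (a < b) by apply/idP/idP => h; lra.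
by case: ifP => // _; rewrite -!EFinD; congr _%:E; ring.
Qed.

Lemma push_shf (c : R) (A : set R) : measurable A ->
  pushforward mu (shfc c) A = mu A.
Proof.
move=> mA; apply/esym/lebesgue_measure_unique => //= _ [[a b]] _ <-.
rewrite /pushforward /=.
have -> : shfc c @^-1` `]a, b]%classic = `]a - c, b - c]%classic.
  apply/seteqP; split => x /=; rewrite /shfc !in_itv /= => /andP[h1 h2];
    apply/andP; split; lra.
rewrite !lebesgue_measure_itv /= !lte_fin.
have -> : (a - c < b - c) = (a < b) by apply/idP/idP => h; lra.
by case: ifP => // _; rewrite -!EFinD; congr _%:E; ring.
Qed.

Lemma int_rfl (c a b : R) (psi : R -> \bar R) : measurable_fun setT psi ->
  (forall x, (0 <= psi x)%E) ->
  (\int[mu]_(x in `[a, b]) psi (c - x)%R = \int[mu]_(x in `[(c - b)%R, (c - a)%R]) psi x)%E.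
Proof.
move=> mpsi psi0.
have := @ge0_integral_pushforward _ _ _ _ R (rflc c) (@measurable_rflc R c) mu
  `[c - b, c - a] psi (measurable_itv _) (measurable_funS measurableT (@subsetT _ _) mpsi) (fun x _ => psi0 x).
have -> : rflc c @^-1` `[c - b, c - a]%classic = `[a, b]%classic.
  apply/seteqP; split => x /=; rewrite /rflc !in_itv /= => /andP[h1 h2];
    apply/andP; split; lra.
move=> <-; eapply eq_measure_integral => A mA _.
  exact: (push_refl c A mA).
Unshelve. exact: measurable_rflc.
Qed.

Lemma int_shf (c a b : R) (psi : R -> \bar R) : measurable_fun setT psi ->
  (forall x, (0 <= psi x)%E) ->
  (\int[mu]_(x in `[a, b]) psi (x + c)%R = \int[mu]_(x in `[(a + c)%R, (b + c)%R]) psi x)%E.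
Proof.
move=> mpsi psi0.
have := @ge0_integral_pushforward _ _ _ _ R (shfc c) (@measurable_shfc R c) mu
  `[a + c, b + c] psi (measurable_itv _) (measurable_funS measurableT (@subsetT _ _) mpsi) (fun x _ => psi0 x).
have -> : shfc c @^-1` `[a + c, b + c]%classic = `[a, b]%classic.
  apply/seteqP; split => x /=; rewrite /shfc !in_itv /= => /andP[h1 h2];
    apply/andP; split; lra.
move=> <-; eapply eq_measure_integral => A mA _.
  exact: (push_shf c A mA).
Unshelve. exact: measurable_shfc.
Qed.

Lemma per_nat (T : Type) (h : R -> T) (p : R) : (forall x, h (x + p) = h x) ->
  forall (n : nat) x, h (x + n%:R * p) = h x.
Proof.
move=> hp; elim=> [|n IH] x; first by rewrite mul0r addr0.
by rewrite -[n.+1]addn1 natrD mulrDl mul1r addrA hp IH.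
Qed.

Lemma per_int (T : Type) (h : R -> T) (p : R) : (forall x, h (x + p) = h x) ->
  forall (k : int) x, h (x + k%:~R * p) = h x.
Proof.
move=> hp [n|n] x; first by rewrite -[_%:~R]/(n%:R) (@per_nat T h p hp).
rewrite NegzE mulrNz mulNr.
have -> : (n.+1)%:~R = n.+1%:R :> R by [].
have := @per_nat T h p hp n.+1 (x - n.+1%:R * p).
by rewrite subrK => <-.
Qed.

Lemma reduce_mod (p : R) : 0 < p -> forall a, exists k : int,
  0 <= a - k%:~R * p < p.
Proof.
move=> p0 a; exists (Num.floor (a / p)).
have h1 := Num.Theory.floor_le (a / p).
have h2 := Num.Theory.floorD1_gt (a / p).
rewrite intrD in h2.
have ha : a = (a / p) * p by rewrite divfK // gt_eqF.
set k := (Num.floor (a / p))%:~R in h1 h2 *.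
set y := a / p in ha h1 h2.
apply/andP; split; nra.
Qed.

Lemma disj_co_cc (a b c d : R) : b <= c -> [disjoint `[a, b[%classic & `[c, d]%classic].
Proof.
move=> bc; apply/eqP/seteqP; split => // x [] /=; rewrite !in_itv /=.
by move=> /andP[_ h1] /andP[h2 _]; lra.
Qed.

Lemma disj_co_co (a b c d : R) : b <= c -> [disjoint `[a, b[%classic & `[c, d[%classic].
Proof.
move=> bc; apply/eqP/seteqP; split => // x [] /=; rewrite !in_itv /=.
by move=> /andP[_ h1] /andP[h2 _]; lra.
Qed.

Lemma per_integral0 (p : R) (psi : R -> \bar R) : 0 < p ->
  measurable_fun setT psi -> (forall x, (0 <= psi x)%E) ->
  (forall x, psi (x + p) = psi x) ->
  forall a, 0 <= a <= p ->
  (\int[mu]_(x in `[a, (a + p)%R]) psi x = \int[mu]_(x in `[0%R, p]) psi x)%E.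
Proof.
move=> p0 mpsi psi0 pp a /andP[a0 ap].
have ms (A : set R) : measurable_fun A psi := measurable_funS measurableT (@subsetT _ _) mpsi.
have -> : `[a, (a + p)%R]%classic = `[a, p[%classic `|` `[p, (a + p)%R]%classic.
  apply/seteqP; split => x /=; rewrite !in_itv /=.
    by move=> /andP[h1 h2]; have [xp|xp] := ltP x p; [left|right]; apply/andP; split.
  by move=> [] /andP[h1 h2]; apply/andP; split; lra.
rewrite ge0_integral_setU //; last exact: disj_co_cc.
have -> : `[0%R, p]%classic = `[0%R, a[%classic `|` `[a, p]%classic.
  apply/seteqP; split => x /=; rewrite !in_itv /=.
    by move=> /andP[h1 h2]; have [xp|xp] := ltP x a; [left|right]; apply/andP; split.
  by move=> [] /andP[h1 h2]; apply/andP; split; lra.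
rewrite ge0_integral_setU //; last exact: disj_co_cc.
rewrite addeC; congr (_ + _)%E; last first.
  rewrite -[in RHS](@integral_itv_bndo_bndc _ _ p) //.
have := int_shf p 0 a psi mpsi psi0; rewrite add0r => <-.
rewrite -(@integral_itv_bndo_bndc _ _ a) //.
- by apply: eq_integral => x _; rewrite pp.
- apply: (measurable_funS measurableT (@subsetT _ _)).
  by apply: measurableT_comp => //; apply: measurable_funD => //; exact: measurable_cst.
- exact: ms.
- exact: ms.
Qed.

Lemma per_integral (p : R) (psi : R -> \bar R) : 0 < p ->
  measurable_fun setT psi -> (forall x, (0 <= psi x)%E) ->
  (forall x, psi (x + p) = psi x) ->
  forall a,
  (\int[mu]_(x in `[a, (a + p)%R]) psi x = \int[mu]_(x in `[0%R, p]) psi x)%E.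
Proof.
move=> p0 mpsi psi0 pp a.
have [k /andP[k1 k2]] := reduce_mod p p0 a.
set a' := a - k%:~R * p in k1 k2.
rewrite -(per_integral0 p psi p0 mpsi psi0 pp a'); last by apply/andP; split => //; exact: ltW.
have := int_shf (k%:~R * p) a' (a' + p) psi mpsi psi0.
have -> : a' + k%:~R * p = a by rewrite /a' subrK.
have -> : a' + p + k%:~R * p = a + p by rewrite /a'; ring.
move=> <-; apply: eq_integral => x _.
by rewrite (@per_int _ psi p pp).
Qed.

Lemma bdd_integrable (D : set R) (u : R -> R) (M : R) : measurable D ->
  (mu D < +oo)%E -> measurable_fun D u -> (forall x, D x -> `|u x| <= M) ->
  mu.-integrable D (EFin \o u).
Proof.
move=> mD Dfin mu_ hM; apply: measurable_bounded_integrable => //.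
rewrite /bounded_near; near=> M' => x Dx /=.
rewrite (le_trans (hM x Dx)) //.
Unshelve. all: by end_near. Qed.

Lemma cmodE (z : R[i]) : cmod z = Num.sqrt (complex.Re z ^+ 2 + complex.Im z ^+ 2).
Proof. by case: z. Qed.

Lemma cmod_ge0 (z : R[i]) : 0 <= cmod z.
Proof. by rewrite cmodE sqrtr_ge0. Qed.

Lemma Re_le_cmod (z : R[i]) : `|complex.Re z| <= cmod z.
Proof.
rewrite cmodE -sqrtr_sqr ler_sqrt ?addr_ge0 ?sqr_ge0 //.
by rewrite lerDl sqr_ge0.
Qed.

Lemma Im_le_cmod (z : R[i]) : `|complex.Im z| <= cmod z.
Proof.
rewrite cmodE -sqrtr_sqr ler_sqrt ?addr_ge0 ?sqr_ge0 //.
by rewrite lerDr sqr_ge0.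
Qed.

Lemma cmod_le_ReIm (z : R[i]) : cmod z <= `|complex.Re z| + `|complex.Im z|.
Proof.
rewrite cmodE -[X in _ <= X]ger0_norm ?addr_ge0 // -sqrtr_sqr ler_sqrt ?sqr_ge0 //.
have := real_normK (num_real (complex.Re z)); have := real_normK (num_real (complex.Im z)).
have := normr_ge0 (complex.Re z); have := normr_ge0 (complex.Im z).
nra.
Qed.

Lemma cs_ineq (a b x y : R) :
  a * x + b * y <= Num.sqrt (a ^+ 2 + b ^+ 2) * Num.sqrt (x ^+ 2 + y ^+ 2).
Proof.
rewrite -sqrtrM ?addr_ge0 ?sqr_ge0 //.
apply: (le_trans (ler_norm _)).
rewrite -sqrtr_sqr ler_sqrt ?sqr_ge0 //; last by rewrite mulr_ge0 ?addr_ge0 ?sqr_ge0.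
have h : 0 <= (a * y - b * x) ^+ 2 by rewrite sqr_ge0.
nra.
Qed.

Lemma mfun_cmod (D : set R) (h : R -> R[i]) : measurable D ->
  measurable_fun D (fun x => complex.Re (h x)) ->
  measurable_fun D (fun x => complex.Im (h x)) ->
  measurable_fun D (fun x => cmod (h x)).
Proof.
move=> mD mre mim.
have -> : (fun x => cmod (h x)) =
   (fun x => Num.sqrt (complex.Re (h x) ^+ 2 + complex.Im (h x) ^+ 2)).
  by apply/funext => x; rewrite cmodE.
apply: (measurableT_comp (continuous_measurable_fun (@sqrt_continuous R))).
by apply: measurable_funD; apply: measurable_funX.
Qed.

Lemma intZ (D : set R) (k : R) (u : R -> R) : measurable D ->
  mu.-integrable D (EFin \o u) -> mu.-integrable D (EFin \o (fun x => k * u x)).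
Proof.
move=> mD iu; apply: (@eq_integrable _ _ _ mu D mD (fun x => k%:E * (EFin \o u) x)%E).
  by move=> x _ /=; rewrite EFinM.
exact: integrableZl.
Qed.

Lemma intD (D : set R) (u v : R -> R) : measurable D ->
  mu.-integrable D (EFin \o u) -> mu.-integrable D (EFin \o v) ->
  mu.-integrable D (EFin \o (fun x => u x + v x)).
Proof.
move=> mD iu iv; apply: (@eq_integrable _ _ _ mu D mD ((EFin \o u) \+ (EFin \o v))%E).
  by move=> x _ /=; rewrite EFinD.
exact: integrableD.
Qed.

Lemma intB (D : set R) (u v : R -> R) : measurable D ->
  mu.-integrable D (EFin \o u) -> mu.-integrable D (EFin \o v) ->
  mu.-integrable D (EFin \o (fun x => u x - v x)).
Proof.
move=> mD iu iv; apply: intD => //.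
apply: (@eq_integrable _ _ _ mu D mD (EFin \o (fun x => -1 * v x))).
  by move=> x _ /=; rewrite mulN1r.
exact: intZ.
Qed.

Lemma cint_le (D : set R) (h : R -> R[i]) (M : R) : measurable D ->
  (mu D < +oo)%E ->
  measurable_fun D (fun x => complex.Re (h x)) ->
  measurable_fun D (fun x => complex.Im (h x)) ->
  (forall x, D x -> cmod (h x) <= M) ->
  cmod (cintegral D h) <= Rintegral mu D (fun x => cmod (h x)).
Proof.
move=> mD Dfin mre mim hM.
have ire : mu.-integrable D (EFin \o (fun x => complex.Re (h x))).
  apply: (bdd_integrable _ _ M) => // x Dx.
  exact: le_trans (Re_le_cmod _) (hM x Dx).
have iim : mu.-integrable D (EFin \o (fun x => complex.Im (h x))).
  apply: (bdd_integrable _ _ M) => // x Dx.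
  exact: le_trans (Im_le_cmod _) (hM x Dx).
have icm : mu.-integrable D (EFin \o (fun x => cmod (h x))).
  apply: (bdd_integrable _ _ M) => //; first exact: mfun_cmod.
  by move=> x Dx; rewrite ger0_norm ?cmod_ge0 // hM.
rewrite /cintegral cmodE /=.
set a := Rintegral mu D _; set b := Rintegral mu D _.
set N := Num.sqrt _.
have N0 : 0 <= N by exact: sqrtr_ge0.
have [->|Npos] := eqVneq N 0; first by apply: Rintegral_ge0 => x _; exact: cmod_ge0.
have NN : N * N = a * a + b * b.
  by rewrite -expr2 sqr_sqrtr ?addr_ge0 ?sqr_ge0 // !expr2.
have key : N * N <= N * Rintegral mu D (fun x => cmod (h x)).
  rewrite NN.
  rewrite {2}/a {2}/b -!RintegralZl // -RintegralD //; last 2 first.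
  - exact: intZ.
  - exact: intZ.
  apply: (@le_Rintegral _ _ _ mu) => //.
  - by apply: intD => //; apply: intZ.
  - exact: intZ.
  move=> x Dx; rewrite /= cmodE.
  have := cs_ineq a b (complex.Re (h x)) (complex.Im (h x)).
  by rewrite /N !expr2.
have Ngt : 0 < N by rewrite lt0r Npos.
by rewrite -(ler_pM2l Ngt).
Qed.

Definition cmeas (u : R -> R[i]) :=
  measurable_fun setT (fun x => complex.Re (u x)) /\
  measurable_fun setT (fun x => complex.Im (u x)).

Lemma cmeas_rfl (u : R -> R[i]) (c : R) : cmeas u -> cmeas (fun x => u (c - x)).
Proof.
move=> [h1 h2]; split.
- exact: (measurableT_comp h1 (@measurable_rflc R c)).
- exact: (measurableT_comp h2 (@measurable_rflc R c)).
Qed.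

Lemma cmeas_shf (u : R -> R[i]) (c : R) : cmeas u -> cmeas (fun x => u (x + c)).
Proof.
move=> [h1 h2]; split.
- exact: (measurableT_comp h1 (@measurable_shfc R c)).
- exact: (measurableT_comp h2 (@measurable_shfc R c)).
Qed.

Lemma cmeas_sub (u v : R -> R[i]) : cmeas u -> cmeas v -> cmeas (fun x => u x - v x).
Proof.
move=> [h1 h2] [h3 h4]; split.
- have -> : (fun x => complex.Re (u x - v x)) = (fun x => complex.Re (u x) - complex.Re (v x)).
    by apply/funext => x; case: (u x) => ? ?; case: (v x).
  exact: measurable_funB.
- have -> : (fun x => complex.Im (u x - v x)) = (fun x => complex.Im (u x) - complex.Im (v x)).
    by apply/funext => x; case: (u x) => ? ?; case: (v x).
  exact: measurable_funB.
Qed.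

Lemma cmeas_mul (u v : R -> R[i]) : cmeas u -> cmeas v -> cmeas (fun x => u x * v x).
Proof.
move=> [h1 h2] [h3 h4]; split.
- have -> : (fun x => complex.Re (u x * v x)) = (fun x =>
     complex.Re (u x) * complex.Re (v x) - complex.Im (u x) * complex.Im (v x)).
    by apply/funext => x; case: (u x) => ? ?; case: (v x).
  by apply: measurable_funB; apply: measurable_funM.
- have -> : (fun x => complex.Im (u x * v x)) = (fun x =>
     complex.Re (u x) * complex.Im (v x) + complex.Im (u x) * complex.Re (v x)).
    by apply/funext => x; case: (u x) => ? ?; case: (v x).
  by apply: measurable_funD; apply: measurable_funM.
Qed.

Lemma mu_itv_fin (a b : R) : (mu `[a, b]%classic < +oo)%E.
Proof. by rewrite lebesgue_measure_itv /=; case: ifP => _; rewrite ?ltry. Qed.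

Lemma Rint_subst (psi : R -> R) (p t : R) : 0 < p -> measurable_fun setT psi ->
  (forall x, 0 <= psi x) -> (forall x, psi (x + p) = psi x) ->
  Rintegral mu `[0, p] (fun x => psi (t - x)) = Rintegral mu `[0, p] psi.
Proof.
move=> p0 mpsi psi0 pp; rewrite /Rintegral; congr fine.
have m' : measurable_fun setT (EFin \o psi) by exact/measurable_EFinP.
have := int_rfl t 0 p (EFin \o psi) m' (fun x => psi0 x).
rewrite subr0 /= => ->.
have := per_integral p (EFin \o psi) p0 m' (fun x => psi0 x) (fun x => congr1 EFin (pp x)) (t - p).
by rewrite subrK.
Qed.

Lemma cint_sub (D : set R) (h1 h2 : R -> R[i]) : measurable D ->
  mu.-integrable D (EFin \o (fun x => complex.Re (h1 x))) ->
  mu.-integrable D (EFin \o (fun x => complex.Im (h1 x))) ->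
  mu.-integrable D (EFin \o (fun x => complex.Re (h2 x))) ->
  mu.-integrable D (EFin \o (fun x => complex.Im (h2 x))) ->
  cintegral D h1 - cintegral D h2 = cintegral D (fun x => h1 x - h2 x).
Proof.
move=> mD i1 i2 i3 i4; rewrite /cintegral.
have -> : Rintegral mu D (fun x => complex.Re (h1 x - h2 x)) =
          Rintegral mu D (fun x => complex.Re (h1 x) - complex.Re (h2 x)).
  by apply: eq_Rintegral => x _; case: (h1 x) => ? ?; case: (h2 x).
have -> : Rintegral mu D (fun x => complex.Im (h1 x - h2 x)) =
          Rintegral mu D (fun x => complex.Im (h1 x) - complex.Im (h2 x)).
  by apply: eq_Rintegral => x _; case: (h1 x) => ? ?; case: (h2 x).
by rewrite !RintegralB.
Qed.

Lemma cmodM (x y : R[i]) : cmod (x * y) = cmod x * cmod y.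
Proof. exact: Normc.normcM. Qed.

Lemma cmodB (x y : R[i]) : cmod (x - y) <= cmod x + cmod y.
Proof.
rewrite /cmod -[Normc.normc y](@normcN R y).
exact: le_normcD.
Qed.

Lemma cmod_real (c : R) : 0 <= c -> cmod (c%:C)%C = c.
Proof. by move=> c0; rewrite cmodE /= expr0n /= addr0 sqrtr_sqr ger0_norm. Qed.

Lemma intRe (D : set R) (u : R -> R[i]) (M : R) : measurable D -> (mu D < +oo)%E ->
  cmeas u -> (forall x, cmod (u x) <= M) ->
  mu.-integrable D (EFin \o (fun x => complex.Re (u x))).
Proof.
move=> mD Dfin [h1 h2] hM; apply: (bdd_integrable _ _ M) => //.
  exact: measurable_funS (@subsetT _ _) h1.
by move=> x _; exact: le_trans (Re_le_cmod _) (hM x).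
Qed.

Lemma intIm (D : set R) (u : R -> R[i]) (M : R) : measurable D -> (mu D < +oo)%E ->
  cmeas u -> (forall x, cmod (u x) <= M) ->
  mu.-integrable D (EFin \o (fun x => complex.Im (u x))).
Proof.
move=> mD Dfin [h1 h2] hM; apply: (bdd_integrable _ _ M) => //.
  exact: measurable_funS (@subsetT _ _) h2.
by move=> x _; exact: le_trans (Im_le_cmod _) (hM x).
Qed.

Lemma core (f g : R -> R[i]) (t r : R) : in_PF f -> in_PF g ->
  cmod (convolution f g (t + r) - convolution f g t) <=
  (2 * pi)^-1 * Rintegral mu `[0, 2 * pi] (fun s => cmod (f (s + r) - f s)).
Proof.
move=> [perf mfr mfi _ bf] [_ mgr mgi _ bg].
have p0 : 0 < 2 * pi :> R by rewrite mulr_gt0 // pi_gt0.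
have cf : cmeas f by split.
have cg : cmeas g by split.
set p := 2 * pi in p0 *.
have mD : measurable `[0, p]%classic by exact: measurable_itv.
have Dfin := mu_itv_fin 0 p.
set h1 := fun x => f (t + r - x) * g x.
set h2 := fun x => f (t - x) * g x.
have ch1 : cmeas h1 by apply: cmeas_mul => //; exact: cmeas_rfl.
have ch2 : cmeas h2 by apply: cmeas_mul => //; exact: cmeas_rfl.
have b1 x : cmod (h1 x) <= 1.
  by rewrite /h1 cmodM -[1]mulr1 ler_pM ?cmod_ge0.
have b2 x : cmod (h2 x) <= 1.
  by rewrite /h2 cmodM -[1]mulr1 ler_pM ?cmod_ge0.
have bd x y : cmod (f x - f y) <= 2.
  by rewrite (le_trans (cmodB _ _)) // -[2]/(1 + 1) lerD.
rewrite /convolution -mulrBr.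
rewrite (cint_sub _ _ _ mD (intRe _ _ _ mD Dfin ch1 b1) (intIm _ _ _ mD Dfin ch1 b1)
   (intRe _ _ _ mD Dfin ch2 b2) (intIm _ _ _ mD Dfin ch2 b2)).
have c0 : 0 <= p^-1 by rewrite invr_ge0 ltW.
rewrite cmodM cmod_real // ler_wpM2l //.
have ch : cmeas (fun x => h1 x - h2 x) by exact: cmeas_sub.
apply: (le_trans (cint_le _ _ 2 mD Dfin _ _ _)).
- exact: measurable_funS (@subsetT _ _) ch.1.
- exact: measurable_funS (@subsetT _ _) ch.2.
- move=> x _; rewrite (le_trans (cmodB _ _)) // -[2]/(1 + 1) lerD //.
have cd : cmeas (fun x => f (t + r - x) - f (t - x)) by apply: cmeas_sub; exact: cmeas_rfl.
have ci : cmeas (fun s => f (s + r) - f s) by apply: cmeas_sub => //; exact: cmeas_shf.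
apply: (le_trans (y := Rintegral mu `[0, p] (fun x => cmod (f (t + r - x) - f (t - x))))).
  apply: (@le_Rintegral _ _ _ mu) => //.
  - apply: (bdd_integrable _ _ 2) => //.
      by apply: mfun_cmod => //; [exact: (measurable_funS measurableT (@subsetT _ _) ch.1)|exact: (measurable_funS measurableT (@subsetT _ _) ch.2)].
    by move=> x _; rewrite ger0_norm ?cmod_ge0 // (le_trans (cmodB _ _)) // -[2]/(1 + 1) lerD.
  - apply: (bdd_integrable _ _ 2) => //.
      by apply: mfun_cmod => //; [exact: (measurable_funS measurableT (@subsetT _ _) cd.1)|exact: (measurable_funS measurableT (@subsetT _ _) cd.2)].
    by move=> x _; rewrite ger0_norm ?cmod_ge0 // bd.
  move=> x _; rewrite /h1 /h2 -mulrBl cmodM.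
  by rewrite ler_piMr ?cmod_ge0.
rewrite -(Rint_subst (fun s => cmod (f (s + r) - f s)) p t p0).
- rewrite le_eqVlt; apply/orP; left; apply/eqP/eq_Rintegral => x _.
  by rewrite addrAC.
- by apply: mfun_cmod => //; [exact: ci.1|exact: ci.2].
- by move=> x; exact: cmod_ge0.
- by move=> x; rewrite perf addrAC perf.
Qed.

Lemma step2 (f : R -> R[i]) (L d r : R) : in_PF f -> mean_lipschitz_smooth f L ->
  0 < d <= pi -> - d <= r <= d ->
  (2 * pi)^-1 * Rintegral mu `[0, 2 * pi] (fun s => cmod (f (s + r) - f s)) <= L * d.
Proof.
move=> [perf mfr mfi _ bf] hL hd hr.
have := hL d hd.
have p0 : 0 < 2 * pi :> R by rewrite mulr_gt0 // pi_gt0.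
have cf : cmeas f by split.
set p := 2 * pi in p0 *.
have mD : measurable `[0, p]%classic by exact: measurable_itv.
have Dfin := mu_itv_fin 0 p.
have ci : cmeas (fun s => f (s + r) - f s) by apply: cmeas_sub => //; exact: cmeas_shf.
have bd x y : cmod (f x - f y) <= 2.
  by rewrite (le_trans (cmodB _ _)) // -[2]/(1 + 1) lerD.
have ipsi : mu.-integrable `[0, p] (EFin \o (fun s => cmod (f (s + r) - f s))).
  apply: (bdd_integrable _ _ 2) => //.
    by apply: mfun_cmod => //; [exact: (measurable_funS measurableT (@subsetT _ _) ci.1)|exact: (measurable_funS measurableT (@subsetT _ _) ci.2)].
  by move=> x _; rewrite ger0_norm ?cmod_ge0 // bd.
have fin : (\int[mu]_(x in `[0%R, p]) (cmod (f (x + r)%R - f x))%:E)%E \is a fin_num.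
  by move: ipsi; apply: integrable_fin_num.
have c0 : 0 <= p^-1 by rewrite invr_ge0 ltW.
move=> H; rewrite -lee_fin EFinM /Rintegral fineK //.
apply: le_trans H.
apply: lee_wpmul2l; first by rewrite lee_fin.
apply: ge0_le_integral1 => //.
- by move=> x _; rewrite lee_fin cmod_ge0.
- apply/measurable_EFinP.
  by apply: mfun_cmod => //; [exact: (measurable_funS measurableT (@subsetT _ _) ci.1)|exact: (measurable_funS measurableT (@subsetT _ _) ci.2)].
- move=> x _; apply: ereal_sup_ubound => /=.
  by exists r => //=; rewrite in_itv /=.
Qed.

Lemma conv_per (f g : R -> R[i]) : in_PF f -> forall x,
  convolution f g (x + 2 * pi) = convolution f g x.
Proof.
move=> [perf _ _ _ _] x; rewrite /convolution.
have -> : (fun tau => f (x + 2 * pi - tau) * g tau) = (fun tau => f (x - tau) * g tau).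
  by apply/funext => tau; rewrite addrAC perf.
by [].
Qed.
End S.

Theorem lemma2_aux (R : realType) (f g : R -> R[i]) (L : R) :
  in_PF f -> in_PF g -> mean_lipschitz_smooth f L -> lipschitz_cont (convolution f g) L.
Proof.
move=> hf hg hL t d d0.
have pi0 : 0 < pi :> R by exact: pi_gt0.
have L0 : 0 <= L.
  have := @step2 R f L pi 0 hf hL.
  rewrite pi0 lexx oppr_le0 (ltW pi0) /= => /(_ isT isT) H.
  have : 0 <= L * pi.
    apply: le_trans H; apply: mulr_ge0; first by rewrite invr_ge0 mulr_ge0 // ltW.
    by apply: Rintegral_ge0 => x _; exact: cmod_ge0.
  by move=> H2; nra.
apply: ge_ereal_sup => _ [r hr <-]; rewrite lee_fin.
rewrite /= in_itv /= in hr.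
have [dpi|dpi] := leP d pi.
  apply: le_trans (core f g t r hf hg) _.
  by apply: (step2 f L d r hf hL) => //; rewrite d0 dpi.
have p0 : 0 < 2 * pi :> R by rewrite mulr_gt0.
have [k /andP[k1 k2]] := reduce_mod (2 * pi) p0 (r + pi).
set r' := r - k%:~R * (2 * pi).
have -> : convolution f g (t + r) = convolution f g (t + r').
  rewrite -(@per_int R _ (convolution f g) (2 * pi) (conv_per f g hf) k (t + r')).
  by rewrite /r' addrA subrK.
apply: le_trans (core f g t r' hf hg) _.
apply: (le_trans (step2 f L pi r' hf hL _ _)).
- by rewrite pi0 lexx.
- by rewrite /r'; apply/andP; split; lra.
- by rewrite ler_wpM2l // ltW.
Qed.


Theorem lemma2 (R : realType) (f g : R -> R[i]) (L : R) :
  in_PF f -> in_PF g -> mean_lipschitz_smooth f L -> lipschitz_cont (convolution f g) L.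
Proof. exact: lemma2_aux. Qed.
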